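(* Let $f : \mathbb{Z}_{\geqslant 1} \to \mathbb{C}$ be an arithmetic function and for real $x \geqslant 1$ set $$S_{r}(x)=\sum_{n_{1}\leqslant x,\dots,n_{r}\leqslant x}\left( f ( n_1 ) + \dotsb + f ( n_r ) \right) \left \lfloor \frac{x}{n_1 \dotsb n_r}\right \rfloor .$$ Define recursively $$T_{1}(x)=\sum_{n \leqslant x} \left \lfloor \frac{x}{n} \right \rfloor (f \star \mathbf{1}) (n), \qquad T_{r}(x) = \sum_{n \leqslant x} T_{r-1} \left( \frac{x}{n} \right) \quad ( r \in \mathbb{Z}_{\geqslant 2} ).$$ Then for every $r \in \mathbb{Z}_{\geqslant 2}$ and every real $x \geqslant 1$, $S_{r}(x)=r\, T_{r-1}(x)$.
   Context: $\lfloor\cdot\rfloor$ is the integer part; sums run over positive integers. $\mathbf{1}$ is the constant function $1$, and $(F \star G)(n) := \sum_{d \mid n} F(d) G(n/d)$ is Dirichlet convolution. *)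

(* Defs.v *)
From HB Require Import structures.
From mathcomp Require Import all_boot all_order all_algebra.
From mathcomp Require Import reals.
From mathcomp Require Import complex.
Set Implicit Arguments. Unset Strict Implicit. Unset Printing Implicit Defensive.
Import Order.TTheory GRing.Theory Num.Theory.
Local Open Scope ring_scope.

Section Defs.
Variable R : realType.
Local Notation C := (complex R).

Definition dconv (F G : nat -> C) (n : nat) : C :=
  \sum_(d <- divisors n) F d * G (n %/ d)%N.

Definition one_fn : nat -> C := fun _ => 1.

Definition ipart (x : R) : int := Num.floor x.
Definition nfloor (x : R) : nat := `|Num.floor x|%N.

(* S_r(x) = sum over n_1,...,n_r in [1, floor x] of
   (f n_1 + ... + f n_r) * floor(x / (n_1 ... n_r)).
   The tuple (n_1,...,n_r) is encoded as t : {ffun 'I_r -> 'I_(nfloor x)} with n_i = (t i).+1. *)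
Definition S (f : nat -> C) (r : nat) (x : R) : C :=
  \sum_(t : {ffun 'I_r -> 'I_(nfloor x)})
     (\sum_(i < r) f (t i).+1) *
     (ipart (x / (\prod_(i < r) ((t i).+1)%:R)))%:~R.

Definition T1 (f : nat -> C) (x : R) : C :=
  \sum_(1 <= n < (nfloor x).+1) (ipart (x / n%:R))%:~R * dconv f one_fn n.

(* T_r(x) = \sum_{n <= x} T_{r-1}(x/n) for r >= 2; T 0 is an unused dummy value 0 *)
Fixpoint T (f : nat -> C) (r : nat) (x : R) {struct r} : C :=
  match r with
  | 0 => 0
  | r'.+1 =>
    match r' with
    | 0 => T1 f x
    | _ => \sum_(1 <= n < (nfloor x).+1) T f r' (x / n%:R)
    end
  end.
End Defs.

(* Main.v *)
Require Import Defs.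
From HB Require Import structures.
From mathcomp Require Import all_boot all_order all_algebra.
From mathcomp Require Import reals.
From mathcomp Require Import complex.
From mathcomp Require Import perm.
Set Implicit Arguments. Unset Strict Implicit. Unset Printing Implicit Defensive.
Import Order.TTheory GRing.Theory Num.Theory.
Local Open Scope ring_scope.

Section Comb.
Variable R : realType.
Local Notation C := (complex R).
Variable f : nat -> C.

Fixpoint G (r M : nat) : C :=
  match r with
  | 0 => M%:R
  | r'.+1 => \sum_(i < M) G r' (M %/ i.+1)%N
  end.

Lemma G0 r : G r 0 = 0.
Proof. by case: r => [|r] //=; rewrite big_ord0. Qed.

Lemma extendF (F : nat -> C) L K : (forall a, (L <= a)%N -> F a = 0) -> (L <= K)%N ->
  \sum_(a < L) F a = \sum_(a < K) F a.
Proof.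
move=> F0 LK; rewrite -!(big_mkord xpredT F).
rewrite (big_cat_nat (leq0n L) LK) /= [X in _ + X]big1_seq ?addr0 //.
by move=> a /andP[_]; rewrite mem_index_iota => /andP[La _]; rewrite F0.
Qed.

Lemma extend (g : nat -> C) (h : nat -> C) L K : h 0 = 0 -> (L <= K)%N ->
  \sum_(a < L) g a * h (L %/ a.+1)%N = \sum_(a < K) g a * h (L %/ a.+1)%N.
Proof.
move=> h0; apply: (@extendF (fun a => g a * h (L %/ a.+1)%N)) => a La.
by rewrite divn_small ?h0 ?mulr0 // ltnS.
Qed.

Definition fcons K r (a : 'I_K) (u : {ffun 'I_r -> 'I_K}) : {ffun 'I_r.+1 -> 'I_K} :=
  [ffun j => if unlift ord0 j is Some k then u k else a].

Lemma sum_split K r (F : {ffun 'I_r.+1 -> 'I_K} -> C) :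
  \sum_t F t = \sum_(a : 'I_K) \sum_(u : {ffun 'I_r -> 'I_K}) F (fcons a u).
Proof.
rewrite pair_big /=.
rewrite (reindex (fun p : 'I_K * {ffun 'I_r -> 'I_K} => fcons p.1 p.2)) //.
exists (fun t : {ffun 'I_r.+1 -> 'I_K} => (t ord0, [ffun k : 'I_r => t (lift ord0 k)])) => [[a u] _|t _] /=.
  rewrite /fcons ffunE unlift_none; congr pair; apply/ffunP => k.
  by rewrite !ffunE liftK.
apply/ffunP => j; rewrite /fcons ffunE.
by case: unliftP => [k ->|->] //; rewrite ffunE.
Qed.

Lemma fcons0 K r a (u : {ffun 'I_r -> 'I_K}) : fcons a u ord0 = a.
Proof. by rewrite /fcons ffunE unlift_none. Qed.

Lemma prod_fcons K r a (u : {ffun 'I_r -> 'I_K}) :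
  (\prod_(i < r.+1) (fcons a u i).+1 = a.+1 * \prod_(i < r) (u i).+1)%N.
Proof.
rewrite big_ord_recl fcons0; congr (_ * _)%N; apply: eq_bigr => i _.
by rewrite /fcons ffunE liftK.
Qed.

Lemma Gsum r M K : (M <= K)%N ->
  \sum_(t : {ffun 'I_r -> 'I_K}) ((M %/ \prod_(i < r) (t i).+1)%N)%:R = G r M.
Proof.
elim: r M => [|r IH] M MK /=.
  rewrite (eq_bigr (fun _ => M%:R)) => [|t _]; last by rewrite big_ord0 divn1.
  by rewrite sumr_const card_ffun !card_ord expn0.
rewrite sum_split (@extendF (fun a => G r (M %/ a.+1)%N) M K) //; last first.
  by move=> a Ma; rewrite divn_small ?G0 // ltnS.
apply: eq_bigr => a _; rewrite -(IH _ (leq_trans (leq_div _ _) MK)).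
by apply: eq_bigr => u _; rewrite prod_fcons divnMA.
Qed.


Definition Tn r M := \sum_(a < M) f a.+1 * G r (M %/ a.+1)%N.

Lemma Acoord r K M : (M <= K)%N ->
  \sum_(t : {ffun 'I_r.+1 -> 'I_K}) f (t ord0).+1 * ((M %/ \prod_(i < r.+1) (t i).+1)%N)%:R
  = Tn r M.
Proof.
move=> MK; rewrite sum_split /Tn (@extend (fun a => f a.+1) (G r) M K (G0 r) MK).
apply: eq_bigr => a _; rewrite -(Gsum r (leq_trans (leq_div _ _) MK)) big_distrr.
by apply: eq_bigr => u _; rewrite fcons0 prod_fcons divnMA.
Qed.

Lemma sym r K (i i' : 'I_r) (F : nat -> C) :
  \sum_(t : {ffun 'I_r -> 'I_K}) f (t i).+1 * F (\prod_(j < r) (t j).+1)%N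
  = \sum_(t : {ffun 'I_r -> 'I_K}) f (t i').+1 * F (\prod_(j < r) (t j).+1)%N.
Proof.
rewrite (reindex (fun t : {ffun 'I_r -> 'I_K} => [ffun j => t (tperm i i' j)])) /=; last first.
  exists (fun t : {ffun 'I_r -> 'I_K} => [ffun j => t (tperm i i' j)]) => t _;
  by apply/ffunP => j; rewrite !ffunE tpermK.
apply: eq_bigr => t _; rewrite [in f _]ffunE tpermL; congr (_ * F _).
rewrite [RHS](reindex_inj (@perm_inj _ (tperm i i'))) /=.
by apply: eq_bigr => j _; rewrite ffunE.
Qed.

Lemma Sn r M :
  \sum_(t : {ffun 'I_r.+1 -> 'I_M}) (\sum_(i < r.+1) f (t i).+1) *
     ((M %/ \prod_(i < r.+1) (t i).+1)%N)%:R = r.+1%:R * Tn r M.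
Proof.
under eq_bigr do rewrite big_distrl.
rewrite exchange_big /= (eq_bigr (fun _ => Tn r M)) => [|i _].
  by rewrite sumr_const card_ord mulr_natl.
rewrite (@sym r.+1 M i ord0 (fun P => ((M %/ P)%N)%:R)).
exact: Acoord.
Qed.

Lemma Tstep r M : Tn r.+1 M = \sum_(1 <= n < M.+1) Tn r (M %/ n)%N.
Proof.
rewrite big_add1 /= big_mkord /Tn.
have E1 a : G r.+1 (M %/ a.+1)%N = \sum_(i < M) G r (M %/ a.+1 %/ i.+1)%N.
  rewrite /= (@extendF (fun i => G r (M %/ a.+1 %/ i.+1)%N) _ M) ?leq_div // => i Mi.
  by rewrite divn_small ?G0 // ltnS.
under eq_bigr do rewrite E1 big_distrr.
rewrite exchange_big /=; apply: eq_bigr => i _.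
rewrite (@extend (fun a => f a.+1) (G r) _ M (G0 r)) ?leq_div //.
by apply: eq_bigr => a _; rewrite -!divnMA mulnC.
Qed.

Lemma divsum (g : nat -> C) d M : (0 < d)%N ->
  \sum_(1 <= n < M.+1 | (d %| n)%N) g n = \sum_(i < M %/ d) g (d * i.+1)%N.
Proof.
move=> d0; elim: M => [|M IH]; first by rewrite big_geq // div0n big_ord0.
rewrite big_mkcond big_nat_recr //= -big_mkcond IH divnS //.
case: ifP => dM /=; last by rewrite addr0 add0n.
rewrite add1n big_ord_recr /=; congr (_ + g _).
by have := divnK dM; rewrite divnS // dM add1n mulnC.
Qed.

Lemma T1n M : Tn 1 M = \sum_(1 <= n < M.+1) ((M %/ n)%N)%:R * dconv f (@one_fn R) n.
Proof.
have E n : (1 <= n < M.+1)%N ->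
   dconv f (@one_fn R) n = \sum_(1 <= d < M.+1 | (d %| n)%N) f d.
  case/andP => n0 nM; rewrite /dconv /one_fn.
  under eq_bigr do rewrite mulr1.
  rewrite -[RHS]big_filter; apply: perm_big; apply: uniq_perm.
  - exact: divisors_uniq.
  - by rewrite filter_uniq // iota_uniq.
  move=> d; rewrite mem_filter -dvdn_divisors // mem_index_iota.
  case dn: (d %| n)%N => //=.
  have := dvdn_leq n0 dn; case: d dn => [|d] dn; last by move=> h; rewrite (leq_ltn_trans h nM).
  by rewrite dvd0n in dn; move/eqP: dn => dn; rewrite dn in n0.
rewrite (eq_big_nat _ _ (fun n nM => congr1 _ (E n nM))).
under eq_bigr do rewrite big_distrr big_mkcond /=.
rewrite exchange_big /= big_add1 /= big_mkord /Tn.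
apply: eq_bigr => a _.
rewrite -big_mkcond /= -big_distrl /= mulrC divsum //; congr (_ * _).
by apply: eq_bigr => i _; rewrite divnMA.
Qed.

End Comb.

Section Real.
Variable R : realType.
Local Notation C := (complex R).
Variable f : nat -> C.

Lemma nfloorE (x : R) : 0 <= x -> Num.floor x = (nfloor x)%:Z.
Proof. by move=> x0; rewrite /nfloor gez0_abs // floor_ge0. Qed.

Lemma floor_div (x : R) P : 0 <= x -> (0 < P)%N ->
  Num.floor (x / P%:R) = ((nfloor x %/ P)%N)%:Z.
Proof.
move=> x0 P0; apply: floor_def.
have Pr : 0 < P%:R :> R by rewrite ltr0n.
have Nx : (nfloor x)%:R <= x by have := floor_le x; rewrite nfloorE // -pmulrn.
have xN : x < (nfloor x).+1%:R.
  by have := floorD1_gt x; rewrite nfloorE // -natr1 rmorphD /= -pmulrn.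
rewrite ler_pdivlMr // ltr_pdivrMr // rmorphD /= -pmulrn natr1.
apply/andP; split.
  by apply: (le_trans _ Nx); rewrite -natrM ler_nat leq_divM.
by apply: (lt_le_trans xN); rewrite -natrM ler_nat ltn_ceil.
Qed.

Lemma nfloor_div (x : R) n : 0 <= x -> (0 < n)%N ->
  nfloor (x / n%:R) = (nfloor x %/ n)%N.
Proof. by move=> x0 n0; rewrite {1}/nfloor floor_div. Qed.

Lemma ipart_div (x : R) P : 0 <= x -> (0 < P)%N ->
  (ipart (x / P%:R))%:~R = ((nfloor x %/ P)%N)%:R :> C.
Proof. by move=> x0 P0; rewrite /ipart floor_div // -pmulrn. Qed.

Lemma TE r (x : R) : 0 <= x -> T f r.+1 x = Tn f r.+1 (nfloor x).
Proof.
elim: r x => [|r IH] x x0.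
  rewrite /= /T1 T1n; apply: eq_big_nat => n /andP[n0 _].
  by rewrite ipart_div.
have -> : T f r.+2 x = \sum_(1 <= n < (nfloor x).+1) T f r.+1 (x / n%:R) by [].
rewrite Tstep; apply: eq_big_nat => n /andP[n0 _].
by rewrite IH ?nfloor_div // divr_ge0 // ler0n.
Qed.

Lemma SE r (x : R) : 0 <= x -> S f r.+1 x = r.+1%:R * Tn f r (nfloor x).
Proof.
move=> x0; rewrite /S -Sn; apply: eq_bigr => t _; congr (_ * _).
by rewrite -natr_prod ipart_div // prodn_gt0.
Qed.

End Real.

Theorem theorem5p1 (R : realType) (f : nat -> complex R) (r : nat) (x : R) :
  (2 <= r)%N -> 1 <= x ->
  S f r x = r%:R * T f r.-1 x.
Proof.
case: r => [|[|r]] // _ x1.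
have x0 : 0 <= x by apply: le_trans x1.
by rewrite SE // /= -TE.
Qed.
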